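(* Let $\ast$ be any of the four standard graph products (Cartesian $\square$, direct $\times$, lexicographic $\circ$, strong $\boxtimes$). No minimum counterexample to the conjecture ''for every graph $G$, $\chi(G)\le \mathrm{toi}(G)$'' is of the form $G \ast H$.
   Context: All graphs are finite, simple and loopless. $\chi(G)$ is the chromatic number. A graph $G$ contains $H$ as a strong immersion if there is an injective map $\varphi\colon V(H)\to V(G)$ and, for each edge $uv\in E(H)$, a path in $G$ joining $\varphi(u),\varphi(v)$, such that these paths are pairwise edge-disjoint and no terminal is an interior vertex of any such path; it is totally odd if all paths have odd length. $\mathrm{toi}(G)$ is the maximum $t$ such that $G$ contains a totally odd strong immersion of $K_t$. Products: Cartesian $G\square H$ on $V(G)\times V(H)$ with $(g_1,h_1)\sim(g_2,h_2)$ iff ($g_1=g_2$, $h_1h_2\in E(H)$) or ($h_1=h_2$, $g_1g_2\in E(G)$); direct $G\times H$ with adjacency iff $g_1g_2\in E(G)$ and $h_1h_2\in E(H)$; strong $G\boxtimes H=(G\square H)\cup(G\times H)$; lexicographic $G\circ H$ with adjacency iff $g_1g_2\in E(G)$, or $g_1=g_2$ and $h_1h_2\in E(H)$. *)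

(* Defs.v *)
From Stdlib Require Import ClassicalEpsilon.
From mathcomp Require Import all_boot.
Set Implicit Arguments. Unset Strict Implicit. Unset Printing Implicit Defensive.

Record graph := Graph {
  vtx : finType;
  adj : rel vtx;
  adj_sym : symmetric adj;
  adj_irr : irreflexive adj }.
Arguments adj : clear implicits.
Arguments adj_sym : clear implicits.
Arguments adj_irr : clear implicits.

Definition colorable (G : graph) (k : nat) : bool :=
  [exists f : {ffun vtx G -> 'I_k},
     [forall u : vtx G, forall v : vtx G, adj G u v ==> (f u != f v)]].

Lemma colorable_card (G : graph) : exists k, colorable G k.
Proof.
exists #|vtx G|; apply/existsP; exists [ffun v => enum_rank v].
apply/forallP => u; apply/forallP => v; apply/implyP => huv.
rewrite !ffunE; apply/eqP => /enum_rank_inj euv.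
by move: huv; rewrite euv adj_irr.
Qed.

Definition chi (G : graph) : nat := ex_minn (colorable_card G).

Definition pb (P : Prop) : bool :=
  if excluded_middle_informative P then true else false.

Definition uses (T : eqType) (p : seq T) (a b : T) : bool :=
  ((a, b) \in zip p (behead p)) || ((b, a) \in zip p (behead p)).

(* G contains a totally odd strong immersion of K_t: terminals phi (injective);
   for each edge ij (i < j) of K_t a path phi i :: P i j from phi i to phi j
   (distinct vertices, consecutive ones adjacent), of odd length (= size (P i j)),
   whose only terminals are its ends; the paths are pairwise edge-disjoint. *)
Definition toi_immersion (G : graph) (t : nat) : Prop :=
  exists (phi : 'I_t -> vtx G) (P : 'I_t -> 'I_t -> seq (vtx G)),
    [/\ injective phi,
        (forall i j : 'I_t, i < j ->
           [/\ path (adj G) (phi i) (P i j),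
               last (phi i) (P i j) = phi j,
               uniq (phi i :: P i j),
               odd (size (P i j)) &
               forall k : 'I_t, phi k \in phi i :: P i j -> (k == i) || (k == j)]) &
        (forall i j k l : 'I_t, i < j -> k < l -> (i, j) != (k, l) ->
           forall a b : vtx G,
             ~~ (uses (phi i :: P i j) a b && uses (phi k :: P k l) a b))].

(* toi(G) = max t with such an immersion; t <= |V(G)| by injectivity of phi. *)
Definition toi (G : graph) : nat :=
  \max_(t < #|vtx G|.+1 | pb (toi_immersion G t)) t.

Definition counterexample (G : graph) : Prop := toi G < chi G.

Definition min_counterexample (G : graph) : Prop :=
  counterexample G /\
  forall G' : graph, #|vtx G'| < #|vtx G| -> chi G' <= toi G'.

Inductive gproduct := Cartesian | Direct | Lexicographic | Strong.

Section Products.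
Variables (G H : graph).
Implicit Types (x y : (vtx G * vtx H)%type).

Definition cart_adj x y :=
  ((x.1 == y.1) && adj H x.2 y.2) || ((x.2 == y.2) && adj G x.1 y.1).
Definition direct_adj x y := adj G x.1 y.1 && adj H x.2 y.2.
Definition strong_adj x y := cart_adj x y || direct_adj x y.
Definition lex_adj x y := adj G x.1 y.1 || ((x.1 == y.1) && adj H x.2 y.2).

Definition prod_adj (p : gproduct) : rel (vtx G * vtx H)%type :=
  match p with
  | Cartesian => cart_adj
  | Direct => direct_adj
  | Lexicographic => lex_adj
  | Strong => strong_adj
  end.

Lemma prod_adj_sym p : symmetric (prod_adj p).
Proof.
move=> x y; case: p => /=;
rewrite /strong_adj /cart_adj /direct_adj /lex_adj
  ?(eq_sym x.1) ?(eq_sym x.2) ?(adj_sym G x.1) ?(adj_sym H x.2) //.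
Qed.

Lemma prod_adj_irr p : irreflexive (prod_adj p).
Proof.
move=> x; case: p => /=;
by rewrite /strong_adj /cart_adj /direct_adj /lex_adj !adj_irr ?andbF.
Qed.

Definition gprod (p : gproduct) : graph :=
  @Graph (vtx G * vtx H)%type (prod_adj p) (@prod_adj_sym p) (@prod_adj_irr p).
End Products.

(* Main.v *)
Require Import Defs.
From Stdlib Require Import ClassicalEpsilon.
From mathcomp Require Import all_boot zify.
Set Implicit Arguments. Unset Strict Implicit. Unset Printing Implicit Defensive.

Definition edge_eq {T : Type} (a b c d : T) := (a = c /\ b = d) \/ (a = d /\ b = c).

Lemma edge_eq_tr {T : Type} (a b c d c' d' : T) :
  edge_eq a b c d -> edge_eq a b c' d' -> edge_eq c d c' d'.
Proof. rewrite /edge_eq; case=> [[<- <-]|[<- <-]]; case=> [[<- <-]|[<- <-]]; tauto. Qed.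

Lemma edge_eq_sym {T : Type} (a b c d : T) : edge_eq a b c d -> edge_eq c d a b.
Proof. rewrite /edge_eq; case=> [[<- <-]|[<- <-]]; tauto. Qed.

Lemma edge_eq_rev {T : Type} (a b c d : T) : edge_eq a b c d -> edge_eq b a c d.
Proof. rewrite /edge_eq; case=> [[<- <-]|[<- <-]]; tauto. Qed.

Definition imm (G : graph) (t : nat) : Prop :=
  exists (phi : nat -> vtx G) (len : nat -> nat -> nat) (W : nat -> nat -> nat -> vtx G),
  [/\ (forall i j, i < t -> j < t -> phi i = phi j -> i = j),
      (forall i j, i < j -> j < t ->
        [/\ W i j 0 = phi i /\ W i j (len i j) = phi j, odd (len i j),
            (forall k, k < len i j -> adj G (W i j k) (W i j k.+1)),
            (forall k l, k <= len i j -> l <= len i j -> W i j k = W i j l -> k = l) &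
            (forall m k, m < t -> k <= len i j -> phi m = W i j k -> m = i \/ m = j)]) &
      (forall i j k l, i < j -> j < t -> k < l -> l < t -> (i,j) <> (k,l) ->
        forall u v, u < len i j -> v < len k l ->
        ~ edge_eq (W i j u) (W i j u.+1) (W k l v) (W k l v.+1))].

Section SeqLemmas.
Variable T : eqType.

Lemma path_nth (e : rel T) x p :
  path e x p <-> forall k, k < size p -> e (nth x (x::p) k) (nth x (x::p) k.+1).
Proof. split; [move/(pathP x) | move=> H; apply/(pathP x)]; by []. Qed.

Lemma uniq_nth (x : T) p :
  uniq (x::p) <-> forall k l, k <= size p -> l <= size p -> nth x (x::p) k = nth x (x::p) l -> k = l.
Proof.
split.
- move/(uniqP x) => H k l hk hl; apply: H; rewrite inE /=; lia.
- move=> H; apply/(uniqP x) => k l; rewrite !inE /= => hk hl; apply: H; lia.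
Qed.

Lemma mem_nth' (x y : T) p :
  y \in x :: p <-> exists k, k <= size p /\ y = nth x (x::p) k.
Proof.
split.
- case/(nthP x) => k hk <-; exists k; split => //; move: hk => /=; lia.
- case=> k [hk ->]; apply: mem_nth => /=; lia.
Qed.

Lemma zip_mem (x : T) p (a b : T) :
  (a, b) \in zip (x :: p) p <-> exists k, k < size p /\ a = nth x (x::p) k /\ b = nth x (x::p) k.+1.
Proof.
elim: p x => [|y p IH] x /=.
- split => //; by case=> k [].
- rewrite inE; split.
  + case/orP.
    * move/eqP => [-> ->]; by exists 0.
    * move/IH => [k [hk [ha hb]]]; exists k.+1; split => //=.
      rewrite ha hb; split; apply: set_nth_default => /=; lia.
  + case=> [[|k]] [hk [ha hb]].
    * by rewrite ha hb eqxx.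
    * apply/orP; right; apply/IH; exists k; split => //=.
      rewrite ha hb /=; split; apply: set_nth_default => /=; lia.
Qed.

Lemma uses_nth (x : T) p a b :
  uses (x::p) a b <-> exists k, k < size p /\ edge_eq a b (nth x (x::p) k) (nth x (x::p) k.+1).
Proof.
rewrite /uses /=; split.
- case/orP => /zip_mem [k [hk [ha hb]]]; exists k; split => //; rewrite /edge_eq; tauto.
- case=> k [hk [[ha hb]|[ha hb]]]; apply/orP; [left|right]; apply/zip_mem; exists k; tauto.
Qed.

Lemma last_nth (x : T) p : last x p = nth x (x :: p) (size p).
Proof. by have := nth_last x (x :: p) => /= ->. Qed.

End SeqLemmas.

Lemma imm_toi_imm G t : imm G t -> toi_immersion G t.
Proof.
case=> phi [len [W [Hinj Hpath Hdisj]]].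
pose P (i j : 'I_t) := mkseq (fun k => W i j k.+1) (len i j).
have HN : forall (i j : 'I_t), i < j -> forall k, k <= len i j ->
    nth (phi i) (phi i :: P i j) k = W i j k.
  move=> i j hij [|k] hk /=.
  - by case: (Hpath i j hij (ltn_ord j)) => [[]].
  - by rewrite nth_mkseq.
exists (fun i : 'I_t => phi i), P; split.
- move=> i j /= e; apply/val_inj; apply: Hinj; rewrite ?ltn_ord //.
- move=> i j hij; case: (Hpath i j hij (ltn_ord j)) => [[h0 hl] hodd hadj hun hterm].
  have sz : size (P i j) = len i j by rewrite size_mkseq.
  split.
  + apply/path_nth => k; rewrite ?sz ?size_mkseq => hk; rewrite !HN //; try lia; exact: hadj.
  + by rewrite last_nth ?sz ?size_mkseq HN ?sz ?size_mkseq.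
  + apply/uniq_nth => k l; rewrite ?sz ?size_mkseq => hk hl'; rewrite !HN //; exact: hun.
  + by rewrite ?sz ?size_mkseq.
  + move=> m /mem_nth' [k [hk]]; rewrite ?sz ?size_mkseq in hk; rewrite HN // => e.
    case: (hterm m k (ltn_ord m) hk e) => E; apply/orP; [left|right]; apply/eqP/val_inj => //.
- move=> i j k l hij hkl ne a b; apply/negP => /andP [/uses_nth [u [hu e1]] /uses_nth [v [hv e2]]].
  have hu' : u < len i j by move: hu; rewrite size_mkseq.
  have hv' : v < len k l by move: hv; rewrite size_mkseq.
  rewrite !HN in e1 e2; try lia.
  apply: (Hdisj i j k l hij (ltn_ord j) hkl (ltn_ord l) _ u v hu' hv' (edge_eq_tr e1 e2)).
  move=> [ei ej]; move: ne; have -> : i = k by apply/val_inj.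
  have -> : j = l by apply/val_inj.
  by rewrite eqxx.
Qed.


Lemma toi_imm_imm G (x0 : vtx G) t : toi_immersion G t -> imm G t.
Proof.
case: t => [|t].
  move=> _; exists (fun _ => x0), (fun _ _ => 0), (fun _ _ _ => x0); split => //.
case=> phi [P [Hinj Hpath Hdisj]].
pose ph m := phi (inord m : 'I_t.+1).
exists ph, (fun i j => size (P (inord i) (inord j))),
  (fun i j k => nth (ph i) (ph i :: P (inord i) (inord j)) k); split.
- move=> i j hi hj /Hinj /(congr1 (@nat_of_ord _)); rewrite (inordK hi) (inordK hj) //.
- move=> i j hij hj.
  have hi : i < t.+1 by lia.
  have hij' : (inord i : 'I_t.+1) < (inord j : 'I_t.+1).
    by rewrite (inordK hi) (inordK hj).
  case: (Hpath _ _ hij') => hp hl hu hodd hterm.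
  split.
  + split => //; by rewrite -last_nth hl.
  + done.
  + by move/path_nth: hp.
  + by move/uniq_nth: hu.
  + move=> m k hm hk e.
    have : phi (inord m) \in ph i :: P (inord i) (inord j).
      by apply/mem_nth'; exists k; split.
    move/hterm/orP => [] /eqP /(congr1 (@nat_of_ord _)); rewrite (inordK hm) ?(inordK hi) ?(inordK hj) => ->; tauto.
- move=> i j k l hij hj hkl hl ne u v hu hv e.
  have hi : i < t.+1 by lia.
  have hk : k < t.+1 by lia.
  have hij' : (inord i : 'I_t.+1) < (inord j : 'I_t.+1) by rewrite (inordK hi) (inordK hj).
  have hkl' : (inord k : 'I_t.+1) < (inord l : 'I_t.+1) by rewrite (inordK hk) (inordK hl).
  have ne' : (inord i : 'I_t.+1, inord j : 'I_t.+1) != (inord k, inord l).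
    apply/negP => /eqP [] /(congr1 (@nat_of_ord _)) e1 /(congr1 (@nat_of_ord _)) e2.
    move: e1 e2; rewrite (inordK hi) (inordK hj) (inordK hk) (inordK hl). by move=> e1 e2; apply: ne; rewrite e1 e2.
  move/negP: (Hdisj _ _ _ _ hij' hkl' ne' (nth (ph i) (ph i :: P (inord i) (inord j)) u)
     (nth (ph i) (ph i :: P (inord i) (inord j)) u.+1)); apply; apply/andP; split.
  + apply/uses_nth; exists u; split => //; rewrite /edge_eq; tauto.
  + apply/uses_nth; exists v; split => //.
Qed.

Lemma pbT (P : Prop) : P -> pb P.
Proof. by rewrite /pb; case: excluded_middle_informative. Qed.

Lemma pbE (P : Prop) : pb P -> P.
Proof. by rewrite /pb; case: excluded_middle_informative. Qed.

Lemma imm_le_toi G t : imm G t -> t <= toi G.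
Proof.
move/imm_toi_imm => I.
have ht : t < #|vtx G|.+1.
  case: I => phi [P [Hinj _ _]].
  by have := leq_card _ Hinj; rewrite card_ord ltnS.
rewrite /toi.
have := @leq_bigmax_cond _ (fun i : 'I_#|vtx G|.+1 => pb (toi_immersion G i)) (fun i => nat_of_ord i) (Ordinal ht).
by apply; apply: pbT.
Qed.

Lemma toi_imm G (x0 : vtx G) : imm G (toi G).
Proof.
apply: (toi_imm_imm x0).
have h0 : (0 < #|vtx G|.+1) by [].
have ne : 0 < #|[pred i : 'I_#|vtx G|.+1 | pb (toi_immersion G i)]|.
  apply/card_gt0P; exists (Ordinal h0); rewrite inE /=; apply: pbT.
  apply: imm_toi_imm; exists (fun _ => x0), (fun _ _ => 0), (fun _ _ _ => x0); split => //.
case: (eq_bigmax_cond (fun i : 'I_#|vtx G|.+1 => nat_of_ord i) ne) => i0 hi0 e.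
rewrite /toi; move: e; rewrite (eq_bigl _ _ (fun i => erefl)) => ->.
by move: hi0; rewrite inE => /pbE.
Qed.

Lemma chi_le G k : colorable G k -> chi G <= k.
Proof. rewrite /chi => h; case: ex_minnP => m _ /(_ k h); done. Qed.

Lemma chi_col G : colorable G (chi G).
Proof. by rewrite /chi; case: ex_minnP. Qed.

Lemma colorableP G k :
  colorable G k <-> exists f : vtx G -> 'I_k, forall u v, adj G u v -> f u != f v.
Proof.
split.
- case/existsP => f /forallP H; exists f => u v huv.
  by move/forallP: (H u) => /(_ v) /implyP /(_ huv).
- case=> f H; apply/existsP; exists [ffun x => f x].
  apply/forallP => u; apply/forallP => v; apply/implyP => huv; rewrite !ffunE; exact: H.
Qed.

Lemma col_cart G H a b : colorable G a -> colorable H b ->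
  colorable (gprod G H Cartesian) (maxn a b).
Proof.
move=> /colorableP [fG HG] /colorableP [fH HH]; apply/colorableP.
have pf : forall x : vtx G, 0 < maxn a b.
  move=> x; have := ltn_ord (fG x); rewrite leq_max; lia.
exists (fun x => @Ordinal (maxn a b) ((fG x.1 + fH x.2) %% maxn a b) (ltn_pmod _ (pf x.1))).
move=> [x1 x2] [y1 y2]; rewrite /= /cart_adj /=.
have hG : forall g : vtx G, fG g < maxn a b by move=> g; have := ltn_ord (fG g); rewrite leq_max; lia.
have hH : forall h : vtx H, fH h < maxn a b by move=> h; have := ltn_ord (fH h); rewrite leq_max; lia.
case/orP => /andP [/eqP <- hadj]; apply/negP => /eqP [].
- rewrite (addnC (fG x1)) (addnC (fG x1)) => /eqP; rewrite eqn_modDr !modn_small ?hH //.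
  move/eqP/val_inj => e; move: (HH _ _ hadj); by rewrite e eqxx.
- move/eqP; rewrite eqn_modDr !modn_small ?hG //.
  move/eqP/val_inj => e; move: (HG _ _ hadj); by rewrite e eqxx.
Qed.

Lemma col_dir G H a : colorable G a -> colorable (gprod G H Direct) a.
Proof.
move=> /colorableP [fG HG]; apply/colorableP; exists (fun x => fG x.1).
by move=> [x1 x2] [y1 y2]; rewrite /= /direct_adj /= => /andP [/HG].
Qed.

Lemma col_dir' G H b : colorable H b -> colorable (gprod G H Direct) b.
Proof.
move=> /colorableP [fH HH]; apply/colorableP; exists (fun x => fH x.2).
by move=> [x1 x2] [y1 y2]; rewrite /= /direct_adj /= => /andP [_ /HH].
Qed.

Lemma col_pair G H a b (p : gproduct) :
  (forall x y, prod_adj p x y -> adj G x.1 y.1 \/ (x.1 = y.1 /\ adj H x.2 y.2)) ->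
  colorable G a -> colorable H b -> colorable (gprod G H p) (a * b).
Proof.
move=> Hp /colorableP [fG HG] /colorableP [fH HH]; apply/colorableP.
have pf : forall x, fG x.1 * b + fH x.2 < a * b.
  move=> x; have := ltn_ord (fG x.1); have := ltn_ord (fH x.2); nia.
exists (fun x => Ordinal (pf x)) => x y /Hp h; apply/negP => /eqP [] e.
have e1 : fG x.1 = fG y.1 :> nat.
  have := ltn_ord (fH x.2); have := ltn_ord (fH y.2); nia.
have e2 : fH x.2 = fH y.2 :> nat.
  have := ltn_ord (fH x.2); have := ltn_ord (fH y.2); nia.
case: h => [/HG | [_ /HH]]; apply/negP; rewrite negbK; apply/eqP/val_inj => //.
Qed.


Lemma imm_mono (A B : graph) (f : vtx A -> vtx B) t :
  injective f -> (forall x y, adj A x y -> adj B (f x) (f y)) -> imm A t -> imm B t.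
Proof.
move=> finj fadj [phi [len [W [Hinj Hpath Hdisj]]]].
exists (f \o phi), len, (fun i j k => f (W i j k)); split.
- by move=> i j hi hj /finj; apply: Hinj.
- move=> i j hij hj; case: (Hpath i j hij hj) => [[h0 hl] hodd hadj hun hterm]; split => /=.
  + by rewrite h0 hl.
  + done.
  + by move=> k hk; apply: fadj; apply: hadj.
  + by move=> k l hk hl' /finj; apply: hun.
  + by move=> m k hm hk /finj; apply: hterm.
- move=> i j k l hij hj hkl hl ne u v hu hv e; apply: (Hdisj i j k l hij hj hkl hl ne u v hu hv).
  by case: e => [[/finj -> /finj ->]|[/finj -> /finj ->]]; [left|right].
Qed.

Definition pidx a k := if k <= a then k else if (k - a) %% 2 == 1 then a.-1 else a.

Lemma pidx_le a k : pidx a k <= a.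
Proof. rewrite /pidx; case: (leqP k a) => h; [lia | case: ifP => _; lia]. Qed.

Lemma pidx_par a k : 0 < a -> pidx a k %% 2 = k %% 2.
Proof. rewrite /pidx => ha; case: (leqP k a) => h1 //; case: ifP => /eqP h2; lia. Qed.

Lemma pidx_id a k : k <= a -> pidx a k = k.
Proof. by rewrite /pidx => ->. Qed.

Lemma pidx_end a n : a <= n -> (n - a) %% 2 = 0 -> pidx a n = a.
Proof. rewrite /pidx => h1 h2; case: (leqP n a) => h3; [lia | case: ifP => /eqP h4; lia]. Qed.

Lemma pidx_step a k : 0 < a -> exists q, q < a /\
  ((pidx a k = q /\ pidx a k.+1 = q.+1) \/ (pidx a k = q.+1 /\ pidx a k.+1 = q)).
Proof.
move=> ha; case: (ltnP k a) => hk.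
- exists k; split => //; left; rewrite !pidx_id //; lia.
- exists a.-1; split; first lia.
  rewrite /pidx; case: (leqP k a) => h1; case: (leqP k.+1 a) => h2; try lia;
  case: ifP => /eqP h3; try case: ifP => /eqP h4; lia.
Qed.

Definition walk (G : graph) (x : nat -> vtx G) a :=
  [/\ odd a, (forall k, k < a -> adj G (x k) (x k.+1)) &
      (forall k l, k <= a -> l <= a -> x k = x l -> k = l)].

Lemma walk_pos G x a : @walk G x a -> 0 < a.
Proof. by case=> h _ _; move: h; case: a. Qed.

Lemma pad_adj G x a : @walk G x a -> forall k, adj G (x (pidx a k)) (x (pidx a k.+1)).
Proof.
move=> w k; have ha := walk_pos w; case: w => _ hadj _.
case: (pidx_step k ha) => q [hq [[-> ->]|[-> ->]]]; first exact: hadj.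
by rewrite adj_sym; apply: hadj.
Qed.

Lemma pad_edge G x a : @walk G x a -> forall k, exists q, q < a /\
  edge_eq (x (pidx a k)) (x (pidx a k.+1)) (x q) (x q.+1).
Proof.
move=> w k; have ha := walk_pos w.
case: (pidx_step k ha) => q [hq [[-> ->]|[-> ->]]]; exists q; split => //; rewrite /edge_eq; tauto.
Qed.

Lemma pad_par G x a : @walk G x a -> forall k l, x (pidx a k) = x (pidx a l) -> k %% 2 = l %% 2.
Proof.
move=> w k l e; have ha := walk_pos w; case: w => _ _ hinj.
have := hinj _ _ (pidx_le a k) (pidx_le a l) e.
by move=> e'; rewrite -(pidx_par k ha) -(pidx_par l ha) e'.
Qed.

Lemma odd_mod2 n : odd n -> n %% 2 = 1.
Proof. by rewrite modn2 => ->. Qed.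

Lemma edge_eq_trans {T : Type} (a b c d e f : T) :
  edge_eq a b c d -> edge_eq c d e f -> edge_eq a b e f.
Proof. rewrite /edge_eq; case=> [[-> ->]|[-> ->]]; case=> [[-> ->]|[-> ->]]; tauto. Qed.

Lemma edge_eq_fst {A B : Type} (p1 p2 p3 p4 : A * B) :
  edge_eq p1 p2 p3 p4 -> edge_eq p1.1 p2.1 p3.1 p4.1.
Proof. rewrite /edge_eq; case=> [[-> ->]|[-> ->]]; tauto. Qed.

Lemma edge_eq_snd {A B : Type} (p1 p2 p3 p4 : A * B) :
  edge_eq p1 p2 p3 p4 -> edge_eq p1.2 p2.2 p3.2 p4.2.
Proof. rewrite /edge_eq; case=> [[-> ->]|[-> ->]]; tauto. Qed.

Lemma imm_walk G phi len W t i j :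
  (forall i j, i < j -> j < t ->
        [/\ W i j 0 = phi i /\ W i j (len i j) = phi j, odd (len i j),
            (forall k, k < len i j -> adj G (W i j k) (W i j k.+1)),
            (forall k l, k <= len i j -> l <= len i j -> W i j k = W i j l -> k = l) &
            (forall m k, m < t -> k <= len i j -> phi m = W i j k -> m = i \/ m = j)]) ->
  i < j -> j < t -> walk (W i j) (len i j).
Proof. by move=> H hij hj; case: (H i j hij hj) => _ ? ? ? _; split. Qed.

Lemma maxn_odd a b : odd a -> odd b -> odd (maxn a b).
Proof. by move=> ha hb; case: (leqP a b). Qed.

Lemma imm_dir G H t : imm G t -> imm H t -> imm (gprod G H Direct) t.
Proof.
case=> [phG [lG [WG [HiG HpG HdG]]]] [phH [lH [WH [HiH HpH HdH]]]].
exists (fun m => (phG m, phH m)), (fun i j => maxn (lG i j) (lH i j)),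
  (fun i j k => (WG i j (pidx (lG i j) k), WH i j (pidx (lH i j) k))); split.
- move=> i j hi hj [e _]; exact: HiG.
- move=> i j hij hj.
  have wG := imm_walk HpG hij hj; have wH := imm_walk HpH hij hj.
  case: (HpG i j hij hj) => [[g0 gl] godd gadj ginj gterm].
  case: (HpH i j hij hj) => [[h0 hl] hodd hadj hinj hterm].
  have oa := odd_mod2 godd; have ob := odd_mod2 hodd.
  split.
  + split; first by rewrite !pidx_id // g0 h0.
    rewrite !pidx_end ?gl ?hl //; lia.
  + exact: maxn_odd.
  + move=> k hk; rewrite /= /direct_adj /=; apply/andP; split; exact: pad_adj.
  + move=> k l hk hl0 [e1 e2]; case: (leqP (lH i j) (lG i j)) => hab.
    * move: e1; rewrite !pidx_id; try lia; apply: ginj; lia.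
    * move: e2; rewrite !pidx_id; try lia; apply: hinj; lia.
  + move=> m k hm hk [e1 e2]; case: (leqP (lH i j) (lG i j)) => hab.
    * move: e1; rewrite !pidx_id; try lia; apply: gterm => //; lia.
    * move: e2; rewrite !pidx_id; try lia; apply: hterm => //; lia.
- move=> i j k l hij hj hkl hl ne u v hu hv /edge_eq_fst /= e.
  case: (pad_edge (imm_walk HpG hij hj) u) => q [hq E1].
  case: (pad_edge (imm_walk HpG hkl hl) v) => q' [hq' E2].
  apply: (HdG i j k l hij hj hkl hl ne q q' hq hq').
  exact: (edge_eq_trans (edge_eq_trans (edge_eq_sym E1) e) E2).
Qed.

Definition simm (G : graph) (t : nat) : Prop :=
  exists (phi : nat -> vtx G) (len : nat -> nat -> nat) (W : nat -> nat -> nat -> vtx G),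
  [/\ (forall i j, i < t -> j < t -> phi i = phi j -> i = j),
      (forall i j, i < t -> j < t -> i != j ->
        [/\ W i j 0 = phi i /\ W i j (len i j) = phi j, walk (W i j) (len i j) &
            (forall m k, m < t -> k <= len i j -> phi m = W i j k -> m = i \/ m = j)]),
      (forall i j, i < t -> j < t -> i != j ->
         len j i = len i j /\ forall k, k <= len i j -> W j i k = W i j (len i j - k)) &
      (forall i j k l, i < t -> j < t -> k < t -> l < t -> i != j -> k != l ->
        ~ (i = k /\ j = l) -> ~ (i = l /\ j = k) ->
        forall u v, u < len i j -> v < len k l ->
        ~ edge_eq (W i j u) (W i j u.+1) (W k l v) (W k l v.+1))].

Lemma imm_simm G t : imm G t -> simm G t.
Proof.
case=> phi [len [W [Hinj Hpath Hdisj]]].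
pose len' i j := if i < j then len i j else len j i.
pose W' i j k := if i < j then W i j k else W j i (len j i - k).
have E : forall i j u, i < t -> j < t -> i != j -> u < len' i j -> exists q,
    q < len (minn i j) (maxn i j) /\
    edge_eq (W' i j u) (W' i j u.+1) (W (minn i j) (maxn i j) q) (W (minn i j) (maxn i j) q.+1).
  move=> i j u hi hj ne; rewrite /len' /W'; case: (ltngtP i j) => h.
  - move=> hu; exists u; split => //; rewrite /edge_eq; tauto.
  - move=> hu; exists (len j i - u.+1); split; first lia.
    have -> : len j i - u = (len j i - u.+1).+1 by lia.
    rewrite /edge_eq; tauto.
  - by move: ne; rewrite h eqxx.
exists phi, len', W'; split => //.
- move=> i j hi hj ne; rewrite /len' /W'; case: (ltngtP i j) => h.
  + case: (Hpath i j h hj) => [[h0 hl] hodd hadj hinj hterm]; split => //; split => //.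
  + case: (Hpath j i h hi) => [[h0 hl] hodd hadj hinj hterm]; split.
    * by rewrite subn0 hl subnn h0.
    * split => //.
      - move=> k hk; have -> : len j i - k = (len j i - k.+1).+1 by lia.
        rewrite adj_sym; apply: hadj; lia.
      - move=> k l hk hl' /hinj; lia.
    * move=> m k hm hk /hterm; lia.
  + by move: ne; rewrite h eqxx.
- move=> i j hi hj ne; rewrite /len' /W'; case: (ltngtP i j) => h.
  + by split.
  + split => // k hk; congr W; lia.
  + by move: ne; rewrite h eqxx.
- move=> i j k l hi hj hk hl nij nkl n1 n2 u v hu hv e.
  case: (E i j u hi hj nij hu) => q [hq E1].
  case: (E k l v hk hl nkl hv) => q' [hq' E2].
  have ne' : (minn i j, maxn i j) <> (minn k l, maxn k l).
    move=> [e1 e2]; move/negP: nij; move/negP: nkl; lia.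
  apply: (Hdisj _ _ _ _ _ _ _ _ ne' q q' hq hq'); try lia.
  exact: (edge_eq_trans (edge_eq_trans (edge_eq_sym E1) e) E2).
Qed.

Lemma const_edge_false G (c a b x y : vtx G) :
  edge_eq c c a b -> edge_eq a b x y -> adj G x y -> False.
Proof.
move=> e1 e2; have ab : a = b by case: e1 => [[<- <-]|[<- <-]].
move: e2; rewrite ab; case=> [[<- <-]|[<- <-]]; by rewrite adj_irr.
Qed.

Lemma cross_false G H (x : nat -> vtx G) a (y z : nat -> vtx H) b u v :
  walk x a -> walk y b -> (forall k, k <= b -> z k = y (b - k)) ->
  ~ edge_eq (x (pidx a u), y (pidx b u)) (x (pidx a u.+1), y (pidx b u.+1))
            (x (pidx a v), z (pidx b v)) (x (pidx a v.+1), z (pidx b v.+1)).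
Proof.
move=> wx wy hz e.
have hb := walk_pos wy; have [ob _ yinj] := wy.
have ob' := odd_mod2 ob.
have pu := pidx_par u hb; have pv := pidx_par v hb.
have pu1 := pidx_par u.+1 hb; have pv1 := pidx_par v.+1 hb.
have lu := pidx_le b u; have lv := pidx_le b v.
have lu1 := pidx_le b u.+1; have lv1 := pidx_le b v.+1.
case: e => [[[/(pad_par wx) e1 e2] _]|[[/(pad_par wx) e1 e2] _]].
- rewrite hz // in e2; move/yinj: e2; lia.
- rewrite hz // in e2; move/yinj: e2; lia.
Qed.

Lemma idx_facts s t m : m < s * t -> [/\ m %/ t < s, m %% t < t & m = m %/ t * t + m %% t].
Proof.
move=> h; have tp : 0 < t by case: t h => //; rewrite muln0.
split; [by rewrite ltn_divLR | by rewrite ltn_mod | exact: divn_eq].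
Qed.

Lemma idx_lt s t m m' : m < m' -> m' < s * t ->
  m %/ t < m' %/ t \/ (m %/ t = m' %/ t /\ m %% t < m' %% t).
Proof.
move=> h h'; have [_ _ e'] := idx_facts h'.
have [_ _ e] := idx_facts (ltn_trans h h').
have le : m %/ t <= m' %/ t by apply: leq_div2r; lia.
case: (ltngtP (m %/ t) (m' %/ t)) => c; [by left | lia | right; split => //].
move: h; rewrite {1}e {1}e' c; lia.
Qed.

Lemma idx_inj t m m' : m %/ t = m' %/ t -> m %% t = m' %% t -> m = m'.
Proof. by move=> e1 e2; rewrite (divn_eq m t) (divn_eq m' t) e1 e2. Qed.
Lemma lt_idxJ (a b c d : nat) : a < c \/ (a = c /\ b < d) -> a = c -> b < d.
Proof. by case=> [h e|[_ h] _] //; move: h; rewrite e ltnn. Qed.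

Lemma lt_idxI (a b c d : nat) : a < c \/ (a = c /\ b < d) -> b = d -> a < c.
Proof. by case=> [h|[_ h]] // e; move: h; rewrite e ltnn. Qed.

Lemma lt_idxI' (a b c d : nat) : a < c \/ (a = c /\ b < d) -> a <> c -> a < c.
Proof. by case=> [h|[e h]] // ne. Qed.

Lemma imm_strong G H s t : imm G s -> simm H t -> imm (gprod G H Strong) (s * t).
Proof.
case=> phG [lG [WG [HiG HpG HdG]]] [phH [lH [WH [HiH HpH HrH HdH]]]].
pose LEN m m' := if m %/ t == m' %/ t then lH (m %% t) (m' %% t)
   else if m %% t == m' %% t then lG (m %/ t) (m' %/ t)
   else maxn (lG (m %/ t) (m' %/ t)) (lH (m %% t) (m' %% t)).
pose WW m m' k : vtx G * vtx H :=
   if m %/ t == m' %/ t then (phG (m %/ t), WH (m %% t) (m' %% t) k)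
   else if m %% t == m' %% t then (WG (m %/ t) (m' %/ t) k, phH (m %% t))
   else (WG (m %/ t) (m' %/ t) (pidx (lG (m %/ t) (m' %/ t)) k),
         WH (m %% t) (m' %% t) (pidx (lH (m %% t) (m' %% t)) k)).
exists (fun m => (phG (m %/ t), phH (m %% t))), LEN, WW; split.
- move=> m m' hm hm' [e1 e2].
  have [hI hJ _] := idx_facts hm; have [hI' hJ' _] := idx_facts hm'.
  apply: idx_inj; [exact: (HiG _ _ hI hI' e1) | exact: (HiH _ _ hJ hJ' e2)].
- move=> m m' hmm hm'.
  have hm : m < s * t by apply: ltn_trans hm'.
  have [hI hJ em] := idx_facts hm; have [hI' hJ' em'] := idx_facts hm'.
  have lt := idx_lt hmm hm'.
  have term : forall m2, m2 < s * t -> m2 %/ t = m %/ t -> m2 %% t = m %% t -> m2 = m.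
    by move=> m2 _; apply: idx_inj.
  have term' : forall m2, m2 < s * t -> m2 %/ t = m' %/ t -> m2 %% t = m' %% t -> m2 = m'.
    by move=> m2 _; apply: idx_inj.
  rewrite /LEN /WW /=.
  move: (m %/ t) (m' %/ t) (m %% t) (m' %% t) hI hJ hI' hJ' lt term term' => I I' J J' hI hJ hI' hJ' lt term term'.
  case: eqP => eI.
  +
    have hJJ : J < J' by lia.
    have nJ : J != J' by lia.
    case: (HpH J J' hJ hJ' nJ) => [[h0 hl] [hodd hadj hinj] hterm].
    split.
    * by rewrite h0 hl eI.
    * done.
    * by move=> k hk; rewrite /= /strong_adj /cart_adj /= eqxx hadj.
    * by move=> k l hk hl' [] /hinj; apply.
    * move=> m2 k hm2 hk [] /HiG e1 /hterm e2.
      have [hI2 hJ2 _] := idx_facts hm2.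
      have e1' := e1 hI2 hI.
      case: (e2 hJ2 hk) => e2'; [left; exact: term | right; apply: term' => //; lia].
  + case: eqP => eJ.
    *
      have hII : I < I' by lia.
      case: (HpG I I' hII hI') => [[g0 gl] godd gadj ginj gterm].
      split.
      - by rewrite g0 gl eJ.
      - done.
      - move=> k hk; rewrite /= /strong_adj /cart_adj /=; apply/orP; left; apply/orP; right; rewrite eqxx; exact: gadj.
      - by move=> k l hk hl' [] /ginj; apply.
      - move=> m2 k hm2 hk [] /gterm e1 /HiH e2.
        have [hI2 hJ2 _] := idx_facts hm2.
        have e2' := e2 hJ2 hJ.
        case: (e1 hI2 hk) => e1'; [left; exact: term | right; apply: term' => //; lia].
    *
      have hII : I < I' by lia.
      have nJ : J != J' by apply/eqP.
      have wG := imm_walk HpG hII hI'.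
      case: (HpG I I' hII hI') => [[g0 gl] godd gadj ginj gterm].
      case: (HpH J J' hJ hJ' nJ) => [[h0 hl] wH hterm].
      have wH' := wH; case: wH' => [hodd hadj hinj].
      have oa := odd_mod2 godd; have ob := odd_mod2 hodd.
      split.
      - split; first by rewrite !pidx_id // g0 h0.
        rewrite !pidx_end ?gl ?hl //; lia.
      - exact: maxn_odd.
      - move=> k hk; rewrite /= /strong_adj /direct_adj /= !pad_adj //; by rewrite orbT.
      - move=> k l hk hl0 [e1 e2]; case: (leqP (lH J J') (lG I I')) => hab.
        + move: e1; rewrite !pidx_id; try lia; apply: ginj; lia.
        + move: e2; rewrite !pidx_id; try lia; apply: hinj; lia.
      - move=> m2 k hm2 hk [e1 e2].
        have [hI2 hJ2 _] := idx_facts hm2.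
        have gI := gterm _ _ hI2 (pidx_le _ k) e1.
        have hJ3 := hterm _ _ hJ2 (pidx_le _ k) e2.
        have pG : (m2 %/ t = I -> k %% 2 = 0) /\ (m2 %/ t = I' -> k %% 2 = 1).
          split => E; rewrite E in e1.
          - have := @pad_par _ _ _ wG 0 k; rewrite (pidx_id (leq0n _)) g0 => /(_ e1).
            by move=> <-.
          - have := @pad_par _ _ _ wG (lG I I') k; rewrite (pidx_id (leqnn _)) gl => /(_ e1).
            by rewrite oa => <-.
        have pH : (m2 %% t = J -> k %% 2 = 0) /\ (m2 %% t = J' -> k %% 2 = 1).
          split => E; rewrite E in e2.
          - have := @pad_par _ _ _ wH 0 k; rewrite (pidx_id (leq0n _)) h0 => /(_ e2).
            by move=> <-.
          - have := @pad_par _ _ _ wH (lH J J') k; rewrite (pidx_id (leqnn _)) hl => /(_ e2).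
            by rewrite ob => <-.
        case: gI => gI; case: hJ3 => hJ3.
        + by left; apply: term.
        + by move: (proj1 pG gI); rewrite (proj2 pH hJ3).
        + by move: (proj2 pG gI); rewrite (proj1 pH hJ3).
        + by right; apply: term'.
- have gadjW : forall i j q, i < j -> j < s -> q < lG i j -> adj G (WG i j q) (WG i j q.+1).
    by move=> i j q hij hj; case: (HpG i j hij hj) => _ _ Ha _ _; apply: Ha.
  have hadjW : forall i j q, i < t -> j < t -> i != j -> q < lH i j -> adj H (WH i j q) (WH i j q.+1).
    by move=> i j q hi hj hij; case: (HpH i j hi hj hij) => _ [] _ Ha _ _; apply: Ha.
  have ED : forall m m' u, m < m' -> m' < s * t -> u < LEN m m' ->
    [\/ [/\ m %/ t = m' %/ t, (WW m m' u).1 = phG (m %/ t), (WW m m' u.+1).1 = phG (m %/ t) &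
          exists2 q, q < lH (m %% t) (m' %% t) & edge_eq (WW m m' u).2 (WW m m' u.+1).2
             (WH (m %% t) (m' %% t) q) (WH (m %% t) (m' %% t) q.+1)],
        [/\ m %% t = m' %% t, (WW m m' u).2 = phH (m %% t), (WW m m' u.+1).2 = phH (m %% t) &
          exists2 q, q < lG (m %/ t) (m' %/ t) & edge_eq (WW m m' u).1 (WW m m' u.+1).1
             (WG (m %/ t) (m' %/ t) q) (WG (m %/ t) (m' %/ t) q.+1)] |
        [/\ m %/ t <> m' %/ t, m %% t <> m' %% t,
          (exists2 q, q < lG (m %/ t) (m' %/ t) & edge_eq (WW m m' u).1 (WW m m' u.+1).1
             (WG (m %/ t) (m' %/ t) q) (WG (m %/ t) (m' %/ t) q.+1)),
          (exists2 q, q < lH (m %% t) (m' %% t) & edge_eq (WW m m' u).2 (WW m m' u.+1).2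
             (WH (m %% t) (m' %% t) q) (WH (m %% t) (m' %% t) q.+1)) &
          forall k, WW m m' k = (WG (m %/ t) (m' %/ t) (pidx (lG (m %/ t) (m' %/ t)) k),
                     WH (m %% t) (m' %% t) (pidx (lH (m %% t) (m' %% t)) k))]].
    move=> m m' u hmm hm'.
    have hm : m < s * t by apply: ltn_trans hm'.
    have [hI hJ em] := idx_facts hm; have [hI' hJ' em'] := idx_facts hm'.
    have lt := idx_lt hmm hm'.
    rewrite /LEN /WW; case: eqP => eI; [|case: eqP => eJ] => hu.
    + apply: Or31; split => //; exists u => //; rewrite /edge_eq; tauto.
    + apply: Or32; split => //; exists u => //; rewrite /edge_eq; tauto.
    + have hII : m %/ t < m' %/ t by lia.
      apply: Or33; split => //.
      * by case: (pad_edge (imm_walk HpG hII hI') u) => q [hq Hq]; exists q.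
      * have nJ : m %% t != m' %% t by apply/eqP.
        by case: (HpH _ _ hJ hJ' nJ) => _ wH _; case: (pad_edge wH u) => q [hq Hq]; exists q.
  move=> m1 m1' m2 m2' h1 h1' h2 h2' ne u v hu hv e.
  have hm1 : m1 < s * t by apply: ltn_trans h1'.
  have hm2 : m2 < s * t by apply: ltn_trans h2'.
  have [a1 b1 em1] := idx_facts hm1; have [a1' b1' em1'] := idx_facts h1'.
  have [a2 b2 em2] := idx_facts hm2; have [a2' b2' em2'] := idx_facts h2'.
  have lt1 := idx_lt h1 h1'; have lt2 := idx_lt h2 h2'.
  have eG := edge_eq_fst e; have eH := edge_eq_snd e.
  have PE : m1 %/ t = m2 %/ t -> m1 %% t = m2 %% t -> m1' %/ t = m2' %/ t -> m1' %% t = m2' %% t -> False.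
    move=> p1 p2 p3 p4; apply: ne; by rewrite (idx_inj p1 p2) (idx_inj p3 p4).
  have Gpair : forall q q', q < lG (m1 %/ t) (m1' %/ t) -> q' < lG (m2 %/ t) (m2' %/ t) ->
     m1 %/ t < m1' %/ t -> m2 %/ t < m2' %/ t ->
     edge_eq (WG (m1 %/ t) (m1' %/ t) q) (WG (m1 %/ t) (m1' %/ t) q.+1)
             (WG (m2 %/ t) (m2' %/ t) q') (WG (m2 %/ t) (m2' %/ t) q'.+1) ->
     m1 %/ t = m2 %/ t /\ m1' %/ t = m2' %/ t.
    move=> q q' hq hq' l1 l2 E.
    case: (eqVneq (m1 %/ t, m1' %/ t) (m2 %/ t, m2' %/ t)) => [[-> ->] //|/eqP nn].
    by case: (HdG _ _ _ _ l1 a1' l2 a2' nn q q' hq hq' E).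
  have Hpair : forall q q', q < lH (m1 %% t) (m1' %% t) -> q' < lH (m2 %% t) (m2' %% t) ->
     m1 %% t != m1' %% t -> m2 %% t != m2' %% t ->
     edge_eq (WH (m1 %% t) (m1' %% t) q) (WH (m1 %% t) (m1' %% t) q.+1)
             (WH (m2 %% t) (m2' %% t) q') (WH (m2 %% t) (m2' %% t) q'.+1) ->
     (m1 %% t = m2 %% t /\ m1' %% t = m2' %% t) \/ (m1 %% t = m2' %% t /\ m1' %% t = m2 %% t).
    move=> q q' hq hq' n1 n2 E.
    case: (boolP ((m1 %% t == m2 %% t) && (m1' %% t == m2' %% t))) => [/andP [/eqP -> /eqP ->]|c1]; first by left.
    case: (boolP ((m1 %% t == m2' %% t) && (m1' %% t == m2 %% t))) => [/andP [/eqP -> /eqP ->]|c2]; first by right.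
    exfalso; apply: (HdH _ _ _ _ b1 b1' b2 b2' n1 n2 _ _ q q' hq hq' E).
    - by move=> [p1 p2]; move: c1; rewrite p1 p2 !eqxx.
    - by move=> [p1 p2]; move: c2; rewrite p1 p2 !eqxx.
  case: (ED m1 m1' u h1 h1' hu) => [[eI1 g1 g1' [q hq Hq]]|[eJ1 k1 k1' [q hq Hq]]|[nI1 nJ1 [q hq Hq] [r hr Hr] WW1]];
  case: (ED m2 m2' v h2 h2' hv) => [[eI2 g2 g2' [q' hq' Hq']]|[eJ2 k2 k2' [q' hq' Hq']]|[nI2 nJ2 [q' hq' Hq'] [r' hr' Hr'] WW2]].
  +
    have eI : m1 %/ t = m2 %/ t.
      apply: (HiG _ _ a1 a2); move: eG; rewrite g1 g1' g2 g2'; by case=> [[-> _]|[-> _]].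
    have l1 : m1 %% t < m1' %% t by apply: (lt_idxJ lt1).
    have l2 : m2 %% t < m2' %% t by apply: (lt_idxJ lt2).
    have n1 : m1 %% t != m1' %% t by rewrite neq_ltn l1.
    have n2 : m2 %% t != m2' %% t by rewrite neq_ltn l2.
    case: (Hpair q q' hq hq' n1 n2 (edge_eq_trans (edge_eq_trans (edge_eq_sym Hq) eH) Hq')) => [[p1 p2]|[p1 p2]].
    * by apply: PE => //; rewrite -eI1 -eI2.
    * by move: l1 l2; rewrite p1 p2 => l1 l2; have := ltn_trans l1 l2; rewrite ltnn.
  +
    have l2 : m2 %/ t < m2' %/ t by apply: (lt_idxI lt2).
    move: eG; rewrite g1 g1' => eG.
    exact: (const_edge_false eG Hq' (gadjW _ _ _ l2 a2' hq')).
  +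
    have l2 : m2 %/ t < m2' %/ t by apply: (lt_idxI' lt2).
    move: eG; rewrite g1 g1' => eG.
    exact: (const_edge_false eG Hq' (gadjW _ _ _ l2 a2' hq')).
  +
    have l1 : m1 %/ t < m1' %/ t by apply: (lt_idxI lt1).
    move: eG; rewrite g2 g2' => eG'; have eG2 := edge_eq_sym eG'.
    exact: (const_edge_false eG2 Hq (gadjW _ _ _ l1 a1' hq)).
  +
    have eJ : m1 %% t = m2 %% t.
      apply: (HiH _ _ b1 b2); move: eH; rewrite k1 k1' k2 k2'; by case=> [[-> _]|[-> _]].
    have l1 : m1 %/ t < m1' %/ t by apply: (lt_idxI lt1).
    have l2 : m2 %/ t < m2' %/ t by apply: (lt_idxI lt2).
    case: (Gpair q q' hq hq' l1 l2 (edge_eq_trans (edge_eq_trans (edge_eq_sym Hq) eG) Hq')) => p1 p2.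
    by apply: PE => //; rewrite -eJ1 -eJ2.
  +
    have n2 : m2 %% t != m2' %% t by apply/eqP.
    move: eH; rewrite k1 k1' => eH.
    exact: (const_edge_false eH Hr' (hadjW _ _ _ b2 b2' n2 hr')).
  +
    have l1 : m1 %/ t < m1' %/ t by apply: (lt_idxI' lt1).
    move: eG; rewrite g2 g2' => eG'; have eG2 := edge_eq_sym eG'.
    exact: (const_edge_false eG2 Hq (gadjW _ _ _ l1 a1' hq)).
  +
    have n1 : m1 %% t != m1' %% t by apply/eqP.
    move: eH; rewrite k2 k2' => eH'; have eH2 := edge_eq_sym eH'.
    exact: (const_edge_false eH2 Hr (hadjW _ _ _ b1 b1' n1 hr)).
  +
    have l1 : m1 %/ t < m1' %/ t by apply: (lt_idxI' lt1).
    have l2 : m2 %/ t < m2' %/ t by apply: (lt_idxI' lt2).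
    have n1 : m1 %% t != m1' %% t by apply/eqP.
    have n2 : m2 %% t != m2' %% t by apply/eqP.
    case: (Gpair q q' hq hq' l1 l2 (edge_eq_trans (edge_eq_trans (edge_eq_sym Hq) eG) Hq')) => p1 p2.
    case: (Hpair r r' hr hr' n1 n2 (edge_eq_trans (edge_eq_trans (edge_eq_sym Hr) eH) Hr')) => [[p3 p4]|[p3 p4]].
    * exact: PE.
    * move: e; rewrite !WW1 !WW2 -p1 -p2 -p3 -p4.
      case: (HrH _ _ b1 b1' n1) => -> hz.
      case: (HpH _ _ b1 b1' n1) => _ wH _.
      exact: (cross_false (imm_walk HpG l1 a1') wH hz).
Qed.

Lemma imm_le G t t' : t' <= t -> imm G t -> imm G t'.
Proof.
move=> le [phi [len [W [Hi Hp Hd]]]]; exists phi, len, W; split.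
- move=> i j hi hj; apply: Hi; lia.
- move=> i j hij hj; case: (Hp i j hij (leq_trans hj le)) => A B C D E; split => // m k hm; apply: E; lia.
- move=> i j k l h1 h2 h3 h4; apply: Hd => //; lia.
Qed.

Theorem mainTheorem2 (p : gproduct) (G H : graph) :
  1 < #|vtx G| -> 1 < #|vtx H| -> ~ min_counterexample (gprod G H p).
Proof.
move=> hG hH [ce minc].
have cardM : #|vtx (gprod G H p)| = #|vtx G| * #|vtx H| by rewrite /= card_prod.
have lG : chi G <= toi G by apply: minc; rewrite cardM; nia.
have lH : chi H <= toi H by apply: minc; rewrite cardM; nia.
have /card_gt0P [g0 _] : 0 < #|vtx G| by lia.
have /card_gt0P [h0 _] : 0 < #|vtx H| by lia.
move: ce; rewrite /counterexample; apply/negP; rewrite -leqNgt.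
case: p {minc cardM}.
- apply: leq_trans (chi_le (col_cart (chi_col G) (chi_col H))) _.
  rewrite geq_max; apply/andP; split.
  + apply: leq_trans lG _; apply: imm_le_toi.
    apply: (@imm_mono G (gprod G H Cartesian) (fun g => (g, h0)) (toi G) _ _ (toi_imm g0)).
    * by move=> a b [].
    * by move=> x y hxy; rewrite /= /cart_adj /= eqxx hxy orbT.
  + apply: leq_trans lH _; apply: imm_le_toi.
    apply: (@imm_mono H (gprod G H Cartesian) (fun h => (g0, h)) (toi H) _ _ (toi_imm h0)).
    * by move=> a b [].
    * by move=> x y hxy; rewrite /= /cart_adj /= eqxx hxy.
- have c1 := chi_le (@col_dir G H _ (chi_col G)).
  have c2 := chi_le (@col_dir' G H _ (chi_col H)).
  have : minn (toi G) (toi H) <= toi (gprod G H Direct).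
    apply: imm_le_toi; apply: imm_dir.
    + apply: imm_le (toi_imm g0); exact: geq_minl.
    + apply: imm_le (toi_imm h0); exact: geq_minr.
  lia.
- have hl : forall x y : vtx G * vtx H, prod_adj Lexicographic x y ->
      adj G x.1 y.1 \/ (x.1 = y.1 /\ adj H x.2 y.2).
    move=> [x1 x2] [y1 y2]; rewrite /= /lex_adj /=.
    case/orP => [h|/andP [/eqP -> h]]; [by left | by right].
  have c := chi_le (@col_pair G H _ _ Lexicographic hl (chi_col G) (chi_col H)).
  have : toi G * toi H <= toi (gprod G H Lexicographic).
    apply: imm_le_toi.
    apply: (@imm_mono (gprod G H Strong) (gprod G H Lexicographic) id).
    + by move=> a b.
    + move=> [x1 x2] [y1 y2]; rewrite /= /strong_adj /cart_adj /direct_adj /lex_adj /=.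
      case/orP => [/orP [/andP [/eqP -> h]|/andP [_ h]]|/andP [h _]]; by rewrite ?h ?eqxx ?orbT.
    + apply: imm_strong; [exact: toi_imm g0 | apply: imm_simm; exact: toi_imm h0].
  have := leq_mul lG lH; lia.
- have hl : forall x y : vtx G * vtx H, prod_adj Strong x y ->
      adj G x.1 y.1 \/ (x.1 = y.1 /\ adj H x.2 y.2).
    move=> [x1 x2] [y1 y2]; rewrite /= /strong_adj /cart_adj /direct_adj /=.
    case/orP => [/orP [/andP [/eqP -> h]|/andP [/eqP e h]]|/andP [h _]]; by [right | left | left].
  have c := chi_le (@col_pair G H _ _ Strong hl (chi_col G) (chi_col H)).
  have : toi G * toi H <= toi (gprod G H Strong).
    apply: imm_le_toi.
    apply: imm_strong; [exact: toi_imm g0 | apply: imm_simm; exact: toi_imm h0].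
  have := leq_mul lG lH; lia.
Qed.
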